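(* Let $p>2$, $\mathcal{C}=\{x\in\mathbb{R}^m:\|x\|_p\leq1\}$, and let $f:\mathbb{R}^m\to\mathbb{R}$ be convex and $L$-smooth (its gradient is $L$-Lipschitz). Assume there is $c>0$ with $\inf_{x\in\mathcal{C}}\|\nabla f(x)\|>c$, and assume the minimizer $x^*$ of $f$ over $\mathcal{C}$ has all coordinates (in the canonical basis) nonzero. Then the Frank-Wolfe algorithm, run with either exact line-search or short steps, converges linearly: there exist $K>0$ and $\rho\in(0,1)$ such that $f(x_t)-f(x^* )\leq K\rho^t$ for all $t\geq0$.
   Context: The Frank-Wolfe algorithm on $\mathcal{C}$ starts from $x_0\in\mathcal{C}$ and iterates $v_t\in\arg\min_{v\in\mathcal{C}}\langle\nabla f(x_t),v\rangle$, $x_{t+1}=x_t+\gamma_t(v_t-x_t)$, where with exact line-search $\gamma_t\in\arg\min_{\gamma\in[0,1]}f(x_t+\gamma(v_t-x_t))$, and with short steps $\gamma_t=\min\{1,\langle\nabla f(x_t),x_t-v_t\rangle/(L\|v_t-x_t\|^2)\}$ (with $\|\cdot\|$ the norm with respect to which $f$ is $L$-smooth). *)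

(* Defs.v *)
From HB Require Import structures.
From mathcomp Require Import all_boot all_order all_algebra.
From mathcomp Require Import all_classical all_reals all_analysis.
Set Implicit Arguments. Unset Strict Implicit. Unset Printing Implicit Defensive.
Import Order.TTheory GRing.Theory Num.Theory.
Import numFieldNormedType.Exports.
Local Open Scope ring_scope.

Section FW.
Variables (R : realType) (m : nat).
Implicit Types (x y u v : 'rV[R]_m).

Definition dotp u v : R := \sum_(i < m) u ord0 i * v ord0 i.

Definition enorm u : R := Num.sqrt (dotp u u).

Definition lpnorm (p : R) u : R := (\sum_(i < m) `|u ord0 i| `^ p) `^ p^-1.

Definition lpball (p : R) : set 'rV[R]_m := [set x | lpnorm p x <= 1].

Definition is_gradient (f : 'rV[R]_m -> R) (g : 'rV[R]_m -> 'rV[R]_m) :=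
  forall x, differentiable f x /\ forall h, 'd f x h = dotp (g x) h.

Definition convex_fun (f : 'rV[R]_m -> R) :=
  forall x y (l : R), 0 <= l <= 1 ->
    f (l *: x + (1 - l) *: y) <= l * f x + (1 - l) * f y.

Definition L_smooth (L : R) (g : 'rV[R]_m -> 'rV[R]_m) :=
  forall x y, enorm (g x - g y) <= L * enorm (x - y).

Definition FW_iterates (C : set 'rV[R]_m) (g : 'rV[R]_m -> 'rV[R]_m)
  (x v : nat -> 'rV[R]_m) (gam : nat -> R) :=
  C (x 0%N) /\
  forall t, [/\ C (v t),
                (forall w, C w -> dotp (g (x t)) (v t) <= dotp (g (x t)) w) &
                x t.+1 = x t + gam t *: (v t - x t)].

Definition exact_ls_step (f : 'rV[R]_m -> R) (x v : nat -> 'rV[R]_m)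
  (gam : nat -> R) :=
  forall t, 0 <= gam t <= 1 /\
    forall c : R, 0 <= c <= 1 ->
      f (x t + gam t *: (v t - x t)) <= f (x t + c *: (v t - x t)).

Definition short_step (L : R) (g : 'rV[R]_m -> 'rV[R]_m) (x v : nat -> 'rV[R]_m)
  (gam : nat -> R) :=
  forall t, gam t = Num.min 1
    (dotp (g (x t)) (x t - v t) / (L * enorm (v t - x t) ^+ 2)).

End FW.

(* Main.v *)
Require Import Defs.
From HB Require Import structures.
From mathcomp Require Import all_boot all_order all_algebra.
From mathcomp Require Import all_classical all_reals all_analysis.
From mathcomp Require Import ring lra.
Import Order.TTheory GRing.Theory Num.Theory.
Import numFieldNormedType.Exports.
Local Open Scope ring_scope.
Set Implicit Arguments.
Unset Strict Implicit.

Section S.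
Variable R : realType.

Lemma powR_convex (p l x y : R) : 1 <= p -> 0 <= l -> l <= 1 -> 0 <= x -> 0 <= y ->
  (l * x + (1 - l) * y) `^ p <= l * x `^ p + (1 - l) * y `^ p.
Proof.
move=> p1 l0 l1 x0 y0.
have := @convex_powR R p p1 (Itv01 l0 l1) x y.
rewrite !inE /= !in_itv /= !andbT => /(_ x0 y0).
by rewrite !convRE /=.
Qed.

Lemma abs_powR_sq (p x : R) : `|x| `^ p = (x ^+ 2) `^ (p / 2).
Proof.
have -> : `|x| `^ p = `|x| `^ (2 * (p / 2)) by congr (_ `^ _); field.
by rewrite powRrM powR_mulrn // real_normK ?num_real.
Qed.

Definition kap (p s : R) := (s ^+ 2 / 2) `^ (p / 2 - 1) / 4.

Lemma kap_gt0 (p s : R) : s != 0 -> 0 < kap p s.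
Proof.
move=> s0; rewrite /kap divr_gt0 // powR_gt0 // divr_gt0 //.
by rewrite exprn_even_gt0.
Qed.

Lemma midpoint_strong (p s t : R) : 2 < p ->
  `|(s + t) / 2| `^ p <= (`|s| `^ p + `|t| `^ p) / 2 - kap p s * (t - s) ^+ 2.
Proof.
move=> p2.
rewrite !abs_powR_sq /kap.
set r := p / 2.
have r1 : 1 < r by rewrite /r ltr_pdivlMr // mul1r.
set A := (s ^+ 2 + t ^+ 2) / 2.
set B := ((s + t) / 2) ^+ 2.
set d := ((t - s) / 2) ^+ 2.
have BAd : B = A - d by rewrite /A /B /d; field.
have B0 : 0 <= B by rewrite /B sqr_ge0.
have BA : B <= A by rewrite BAd gerBl /d sqr_ge0.
have A0 : 0 <= A by apply: le_trans BA.
have sA : s ^+ 2 / 2 <= A.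
  by rewrite /A ler_pM2r // lerDl sqr_ge0.
have h1 : B `^ r <= B * A `^ (r - 1).
  rewrite -mulr_powRB1 //; last by apply: lt_trans r1.
  rewrite ler_wpM2l // ge0_ler_powR // ?nnegrE //.
  by rewrite subr_ge0 ltW.
have h2 : A `^ r = A * A `^ (r - 1) by rewrite mulr_powRB1 //; apply: lt_trans r1.
have h3 : (s ^+ 2 / 2) `^ (r - 1) <= A `^ (r - 1).
  apply: ge0_ler_powR => //; first by rewrite subr_ge0 ltW.
  by rewrite nnegrE divr_ge0 // sqr_ge0.
have h4 : A `^ r <= (s ^+ 2) `^ r / 2 + (t ^+ 2) `^ r / 2.
  have H12 : (0:R) <= 1/2 by lra.
  have H12' : (1/2:R) <= 1 by lra.
  have H := @powR_convex r (1/2) (s ^+ 2) (t ^+ 2) (ltW r1) H12 H12' (sqr_ge0 _) (sqr_ge0 _).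
  have E1 : 1 / 2 * s ^+ 2 + (1 - 1/2) * t ^+ 2 = A by rewrite /A; field.
  rewrite E1 in H; apply: le_trans H _; lra.
have d0 : 0 <= d by rewrite /d sqr_ge0.
have e : (t - s) ^+ 2 = 4 * d by rewrite /d; field.
rewrite e.
have h5 : d * (s ^+ 2 / 2) `^ (r - 1) <= d * A `^ (r - 1) by rewrite ler_wpM2l.
rewrite BAd in h1.
have : (A - d) * A `^ (r - 1) = A `^ r - d * A `^ (r - 1) by rewrite h2; ring.
move=> h6.
rewrite -BAd in h1 h6 *.
have -> : (s ^+ 2 / 2) `^ (r - 1) / 4 * (4 * d) = d * (s ^+ 2 / 2) `^ (r - 1) by field.
lra.
Qed.
End S.

Section V.
Variables (R : realType) (m : nat).
Implicit Types (u w y : 'rV[R]_m).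

Local Notation dp := (@dotp R m).
Definition N2 u := dp u u.

Lemma dotpC u w : dp u w = dp w u.
Proof. by apply: eq_bigr => i _; rewrite mulrC. Qed.

Lemma dotpDl u w y : dp (u + w) y = dp u y + dp w y.
Proof. by rewrite /dotp -big_split; apply: eq_bigr => i _; rewrite mxE mulrDl. Qed.

Lemma dotpZl (a : R) u w : dp (a *: u) w = a * dp u w.
Proof. by rewrite /dotp mulr_sumr; apply: eq_bigr => i _; rewrite mxE mulrA. Qed.

Lemma dotpNl u w : dp (- u) w = - dp u w.
Proof. by rewrite -scaleN1r dotpZl mulN1r. Qed.

Lemma dotpBl u w y : dp (u - w) y = dp u y - dp w y.
Proof. by rewrite dotpDl dotpNl. Qed.

Lemma dotpDr u w y : dp y (u + w) = dp y u + dp y w.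
Proof. by rewrite dotpC dotpDl !(dotpC y). Qed.

Lemma dotpZr (a : R) u w : dp w (a *: u) = a * dp w u.
Proof. by rewrite dotpC dotpZl dotpC. Qed.

Lemma dotpNr u w : dp w (- u) = - dp w u.
Proof. by rewrite dotpC dotpNl dotpC. Qed.

Lemma dotpBr u w y : dp y (u - w) = dp y u - dp y w.
Proof. by rewrite dotpDr dotpNr. Qed.

Lemma N2_ge0 u : 0 <= N2 u.
Proof. by apply: sumr_ge0 => i _; rewrite -expr2 sqr_ge0. Qed.

Lemma enorm_sq u : enorm u ^+ 2 = N2 u.
Proof. by rewrite /enorm sqr_sqrtr // N2_ge0. Qed.

Lemma N2Z (a : R) u : N2 (a *: u) = a ^+ 2 * N2 u.
Proof. by rewrite /N2 dotpZl dotpZr mulrA expr2. Qed.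

Lemma N2N u : N2 (- u) = N2 u.
Proof. by rewrite /N2 dotpNl dotpNr opprK. Qed.

Lemma N2B u w : N2 (u - w) = N2 u - 2 * dp u w + N2 w.
Proof.
rewrite /N2 dotpBl !dotpBr (dotpC w u); ring.
Qed.

Lemma N2D u w : N2 (u + w) = N2 u + 2 * dp u w + N2 w.
Proof.
rewrite /N2 dotpDl !dotpDr (dotpC w u); ring.
Qed.

Lemma amgm u w (l : R) : dp u w * (2 * l) <= N2 u + l ^+ 2 * N2 w.
Proof.
have := N2_ge0 (u - l *: w).
rewrite N2B dotpZr N2Z => H; lra.
Qed.

Lemma N2_par u w : N2 (u + w) <= 2 * N2 u + 2 * N2 w.
Proof.
have := N2_ge0 (u - w); rewrite N2B N2D => H; lra.
Qed.

Lemma N2_eq0 u a : N2 u = 0 -> dp a u = 0.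
Proof.
move=> H.
have H3 : \sum_(i < m) (u ord0 i) ^+ 2 = 0.
  by rewrite -[RHS]H /N2 /dotp; apply: eq_bigr => j _; rewrite expr2.
have H2 : forall i : 'I_m, u ord0 i = 0.
  move=> i; apply/eqP; rewrite -sqrf_eq0; apply/eqP.
  by apply: (psumr_eq0P (fun i _ => sqr_ge0 (u ord0 i)) H3).
by rewrite /dotp big1 // => i _; rewrite H2 mulr0.
Qed.

Lemma smooth_sq (L : R) g : 0 <= L -> L_smooth L g ->
  forall u w, N2 (g u - g w) <= L ^+ 2 * N2 (u - w).
Proof.
move=> L0 Hs u w; rewrite -!enorm_sq -exprMn.
rewrite ler_sqr ?nnegrE ?mulr_ge0 ?sqrtr_ge0 //.
Qed.

End V.
Arguments N2 {R m}.

Section P.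
Variables (R : realType) (m : nat).
Implicit Types (u w y : 'rV[R]_m).

Definition phi (p : R) u := \sum_(i < m) `|u ord0 i| `^ p.

Lemma phi_ge0 p u : 0 <= phi p u.
Proof. by apply: sumr_ge0 => i _; apply: powR_ge0. Qed.

Lemma powR_le (r a b : R) : 0 <= r -> 0 <= a -> a <= b -> a `^ r <= b `^ r.
Proof.
move=> r0 a0 ab; apply: (ge0_ler_powR r0) => //; rewrite nnegrE //.
exact: le_trans ab.
Qed.

Lemma lpball_phi p u : 0 < p -> lpball p u <-> phi p u <= 1.
Proof.
move=> p0.
have E : lpnorm p u = (phi p u) `^ p^-1 by [].
have E2 : phi p u = ((phi p u) `^ p^-1) `^ p.
  by rewrite -powRrM mulVf ?gt_eqF // powRr1 // phi_ge0.
have -> : lpball p u <-> lpnorm p u <= 1 by [].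
rewrite E; split => H.
- rewrite E2.
  apply: (@le_trans _ _ (1 `^ p)); last by rewrite powR1.
  by apply: powR_le => //; [exact: ltW | exact: powR_ge0].
- apply: (@le_trans _ _ (1 `^ p^-1)); last by rewrite powR1.
  by apply: powR_le => //; [rewrite invr_ge0 ltW | exact: phi_ge0].
Qed.

Lemma bernoulli_nat (n : nat) (e : R) : 0 <= e -> e <= 1 ->
  1 - n%:R * e <= (1 - e) ^+ n.
Proof.
move=> e0 e1; elim: n => [|n IH]; first by rewrite mul0r subr0 expr0.
rewrite exprSr.
have h1 : (1 - n%:R * e) * (1 - e) <= (1 - e) ^+ n * (1 - e).
  by rewrite ler_wpM2r // subr_ge0.
have h2 : 0 <= n%:R * e * e by rewrite mulr_ge0 // mulr_ge0.
apply: le_trans h1; rewrite -natr1; lra.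
Qed.

Lemma minpos (F : 'I_m -> R) : (forall i, 0 < F i) ->
  exists2 k, 0 < k & forall i, k <= F i.
Proof.
move=> Fp; exists (1 + \sum_i (F i)^-1)^-1.
  by rewrite invr_gt0 ltr_wpDr // sumr_ge0 // => i _; rewrite invr_ge0 ltW.
move=> i; rewrite -[F i]invrK lef_pV2 ?posrE ?invr_gt0 ?ltr_wpDr //;
  try by rewrite sumr_ge0 // => j _; rewrite invr_ge0 ltW.
rewrite (bigD1 i) //=.
have : 0 <= \sum_(j < m | j != i) (F j)^-1.
  by rewrite sumr_ge0 // => j _; rewrite invr_ge0 ltW.
lra.
Qed.


Local Notation dp := (@dotp R m).

Lemma phi_conv p u w l : 1 <= p -> 0 <= l -> l <= 1 ->
  phi p (u + l *: (w - u)) <= l * phi p w + (1 - l) * phi p u.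
Proof.
move=> p1 l0 l1; rewrite /phi !mulr_sumr -big_split /=.
apply: ler_sum => i _; rewrite !mxE.
have -> : u ord0 i + l * (w ord0 i - u ord0 i) = l * w ord0 i + (1 - l) * u ord0 i by ring.
apply: (@le_trans _ _ ((l * `|w ord0 i| + (1 - l) * `|u ord0 i|) `^ p)).
  apply: powR_le; first by apply: le_trans p1.
    exact: normr_ge0.
  apply: le_trans (ler_normD _ _) _.
  have l0' : 0 <= 1 - l by lra.
  by rewrite !normrM (ger0_norm l0) (ger0_norm l0').
by apply: powR_convex.
Qed.

Lemma QG p (a xs : 'rV[R]_m) : 2 < p -> (exists j, a ord0 j != 0) -> phi p xs <= 1 ->
  (forall i, xs ord0 i != 0) ->
  (forall w, phi p w <= 1 -> dp a xs <= dp a w) ->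
  exists2 k, 0 < k & forall y, phi p y <= 1 -> k * N2 (y - xs) <= dp a (y - xs).
Proof.
move=> p2 [j aj] Hxs xs0 Hmin.
have p0 : 0 < p by apply: lt_trans p2.
pose sg : R := if 0 < a ord0 j then -1 else 1.
pose e : 'rV[R]_m := \row_(i < m) (if i == j then sg else 0).
have phie : phi p e <= 1.
  rewrite /phi (bigD1 j) //= big1 => [|i ij]; last first.
    by rewrite mxE (negbTE ij) normr0 powR0 // gt_eqF.
  rewrite mxE eqxx /sg; case: ifP => _; by rewrite ?normrN normr1 powR1 addr0.
have dpe : dp a e = - `|a ord0 j|.
  rewrite /dotp (bigD1 j) //= big1 => [|i ij]; last by rewrite mxE (negbTE ij) mulr0.
  rewrite mxE eqxx /sg addr0; case: ifPn => H.
    by rewrite gtr0_norm // mulrN1.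
  by rewrite ler0_norm ?mulr1 ?opprK // leNgt.
set beta := `|a ord0 j|.
have beta0 : 0 < beta by rewrite normr_gt0.
have Hxb : dp a xs <= - beta by rewrite -dpe; apply: Hmin.
have [k0 k0p Hk0] := minpos (fun i => kap_gt0 p (xs0 i)).
have [n pn] : exists n : nat, p < n%:R.
  by exists (Num.Def.trunc p).+1; exact: truncnS_gt.
have n2 : 2 < n%:R :> R by apply: lt_trans pn.
have n0 : 0 < n%:R :> R by apply: lt_trans n2.
exists (2 * beta * k0 / n%:R); first by rewrite divr_gt0 // !mulr_gt0.
move=> y Hy.
set z := (2^-1) *: (xs + y).
set Q := k0 * N2 (y - xs).
have Q0 : 0 <= Q := mulr_ge0 (ltW k0p) (N2_ge0 _).
have phiz : phi p z <= (phi p xs + phi p y) / 2 - Q.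
  have H1 : phi p z <= \sum_(i < m) ((`|xs ord0 i| `^ p) * 2^-1 + (`|y ord0 i| `^ p) * 2^-1
                 - k0 * ((y - xs) ord0 i * (y - xs) ord0 i)).
    apply: ler_sum => i _.
    have := midpoint_strong (xs ord0 i) (y ord0 i) p2.
    have := Hk0 i; rewrite /= => Hk.
    have hsq : 0 <= (y ord0 i - xs ord0 i) ^+ 2 by apply: sqr_ge0.
    have hk : k0 * (y ord0 i - xs ord0 i) ^+ 2 <= kap p (xs ord0 i) * (y ord0 i - xs ord0 i) ^+ 2.
      by rewrite ler_wpM2r.
    rewrite !mxE -expr2 (mulrC (2^-1)) => H; apply: le_trans H _; lra.
  apply: le_trans H1 _.
  rewrite !big_split /= sumrN -!mulr_suml -mulr_sumr /phi /Q /N2 /dotp.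
  by apply: lerB => //; rewrite mulrDl.
have phiz1 : phi p z <= 1 - Q by lra.
have Q1 : Q <= 1 by have := phi_ge0 p z; lra.
set eta := Q / n%:R.
have eta0 : 0 <= eta by rewrite divr_ge0 // ltW.
have eta1 : eta < 1.
  rewrite /eta ltr_pdivrMr // mul1r; apply: le_lt_trans Q1 _.
  by apply: lt_trans n2; lra.
set mu := 1 - eta.
have mu0 : 0 < mu by rewrite /mu subr_gt0.
have mu1 : mu <= 1 by rewrite /mu; lra.
have powmu : 1 - Q <= mu `^ p.
  have h1 := bernoulli_nat n eta0 (ltW eta1).
  have E : n%:R * eta = Q by rewrite /eta; field; rewrite gt_eqF.
  rewrite E in h1; apply: le_trans h1 _.
  have mm : 0 < mu <= 1 by rewrite mu0 mu1.
  rewrite -powR_mulrn -/mu; [exact: (ger_powR mm (ltW pn)) | exact: ltW].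
set w := mu^-1 *: z.
have mui0 : 0 <= mu^-1 by rewrite invr_ge0 ltW.
have phiw : phi p w <= 1.
  have E : phi p w = mu^-1 `^ p * phi p z.
    rewrite /phi mulr_sumr; apply: eq_bigr => i _.
    by rewrite mxE normrM (ger0_norm mui0) powRM.
  have E2 : mu^-1 `^ p * mu `^ p = 1.
    rewrite -powRM //; last exact: ltW.
    by rewrite mulVf ?gt_eqF // powR1.
  rewrite E -E2; apply: ler_wpM2l; first exact: powR_ge0.
  exact: le_trans phiz1 powmu.
have Hw := Hmin w phiw.
rewrite /w dotpZr in Hw.
have Hz : mu * dp a xs <= dp a z.
  by have := ler_wpM2l (ltW mu0) Hw; rewrite mulrA mulfV ?gt_eqF // mul1r.
rewrite /z dotpZr dotpDr in Hz.
rewrite dotpBr.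
have H3 : eta * dp a xs <= eta * (- beta) by rewrite ler_wpM2l.
have E3 : 2 * beta * k0 / n%:R * N2 (y - xs) = 2 * (eta * beta).
  by rewrite /eta /Q; field; rewrite gt_eqF.
rewrite E3.
have E4 : mu * dp a xs = dp a xs - eta * dp a xs by rewrite /mu; ring.
rewrite E4 in Hz.
have E5 : 2^-1 * (dp a xs + dp a y) = dp a xs / 2 + dp a y / 2 by field.
rewrite E5 in Hz.
lra.
Qed.

End P.

Section G. Variable R : realFieldType.

Lemma step_arith (L M G Nd h : R) : 0 < L -> 0 < M -> 0 <= h -> h <= G ->
  0 <= Nd -> Nd <= M * h -> (Nd = 0 -> G = 0) ->
  - (Num.min 1 (G / (L * Nd))) * G + L / 2 * (Num.min 1 (G / (L * Nd))) ^+ 2 * Nd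
  <= - (Num.min (1/2) (1 / (2 * L * M))) * h.
Proof.
move=> L0 M0 h0 hG N0 NM NG.
set q := Num.min (1/2) (1 / (2 * L * M)).
have q1 : q <= 1/2 by rewrite /q ge_min lexx.
have q2 : q <= 1 / (2 * L * M) by rewrite /q ge_min lexx orbT.
have q0 : 0 <= q by rewrite /q le_min; apply/andP; split; rewrite divr_ge0 // ?mulr_ge0 // ltW.
have [Nz|Np] := eqVneq Nd 0.
  have G0 := NG Nz; have hz : h = 0 by lra.
  rewrite Nz G0 hz !mulr0 addr0; lra.
have Npos : 0 < Nd by rewrite lt_neqAle eq_sym Np N0.
have LN : 0 < L * Nd by rewrite mulr_gt0.
have [GL|GL] := lerP G (L * Nd).
  have X1 : G / (L * Nd) <= 1 by rewrite ler_pdivrMr // mul1r.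
  rewrite min_r //.
  set X := G / (L * Nd).
  have EX : L * Nd * X = G by rewrite /X mulrC divfK // gt_eqF.
  have E1 : L / 2 * X ^+ 2 * Nd = X * G / 2 by rewrite -EX; field.
  rewrite E1.
  have H1 : q * h <= h / (2 * L * M).
    by apply: le_trans (ler_wpM2r h0 q2) _; rewrite mul1r mulrC.
  have H2 : h / (2 * L * M) <= X * G / 2.
    rewrite /X ler_pdivrMr ?mulr_gt0 //.
    have -> : G / (L * Nd) * G / 2 * (2 * L * M) = G * G * M / Nd.
      by field; rewrite !gt_eqF.
    rewrite ler_pdivlMr //.
    have e1 : h * Nd <= h * (M * h) by rewrite ler_wpM2l.
    have e2 : h * h <= G * G by rewrite ler_pM // .
    have e3 : M * (h * h) <= M * (G * G) by rewrite ler_wpM2l // ltW.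
    have -> : G * G * M = M * (G * G) by ring.
    apply: le_trans e1 _; rewrite (_ : h * (M * h) = M * (h * h)) //; ring.
  lra.
rewrite min_l; last by rewrite ler_pdivlMr // mul1r ltW.
have H1 : q * h <= h / 2 by apply: le_trans (ler_wpM2r h0 q1) _; rewrite mulrC; lra.
rewrite expr1n mulr1; lra.
Qed.
End G.
Lemma polyd (R : realType) (K c t : R) :
  is_derive t 1 (fun s : R => K * s + c * s ^+ 2) (K + c * (2 * t)).
Proof.
have H1 := @is_deriveX R R id 2 t 1 1 (is_derive_id t 1).
have H2 := is_deriveZ c H1.
have H3 := is_deriveZ K (is_derive_id t 1).
have H := is_deriveD H3 H2.
have E : (K *: (@id R)) + c *: ((@id R) ^+ 2) = (fun s : R => K * s + c * s ^+ 2).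
  by apply/funext => s /=; rewrite !fctE /= expr2.
rewrite -E; apply: is_derive_eq H _.
by rewrite /GRing.scale /= !mulr1 expr1.
Qed.


Section A.
Variables (R : realType) (m : nat).
Variables (f : 'rV[R]_m -> R) (g : 'rV[R]_m -> 'rV[R]_m).
Hypothesis Hg : is_gradient f g.

Lemma dir_deriv (x d : 'rV[R]_m) (s : R) :
  derivable (fun s : R => f (x + s *: d)) s 1 /\
  derive1 (fun s : R => f (x + s *: d)) s = dotp (g (x + s *: d)) d.
Proof.
set y := x + s *: d.
have E : (fun h : R => h^-1 *: (((fun s : R => f (x + s *: d)) \o shift s) (h *: 1)
             - (fun s : R => f (x + s *: d)) s)) =
         (fun h : R => h^-1 *: ((f \o shift y) (h *: d) - f y)).
  apply/funext => h /=; congr (_ *: (f _ - _)).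
  have -> : h%:A = h by exact: mulr1.
  by rewrite /y scalerDl addrCA.
have [df dg] := Hg y.
split.
  have H : derivable f y d by apply: diff_derivable.
  by rewrite /derivable E; exact: H.
by rewrite derive1E /derive E -/(derive f y d) deriveE // dg.
Qed.

Lemma descent (L : R) (x d : 'rV[R]_m) (s : R) : L_smooth L g -> 0 < L ->
  0 <= s -> s <= 1 ->
  f (x + s *: d) <= f x + s * dotp (g x) d + L / 2 * s ^+ 2 * N2 d.
Proof.
move=> Hs L0 s0 s1.
set K := dotp (g x) d; set c := L / 2 * N2 d.
pose psi := fun t : R => f (x + t *: d) - (K * t + c * t ^+ 2).
have dpsi : forall t : R, is_derive t 1 psi (dotp (g (x + t *: d)) d - (K + c * (2 * t))).
  move=> t; have [d1 e1] := dir_deriv x d t.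
  have H0 : is_derive t 1 (fun t => f (x + t *: d)) (dotp (g (x + t *: d)) d).
    by apply: is_derive_eq (derivableP d1) _; rewrite -derive1E e1.
  have H := is_deriveB H0 (polyd K c t).
  have E : (fun t => f (x + t *: d)) - (fun s : R => K * s + c * s ^+ 2) = psi.
    by apply/funext => u; rewrite /psi fctE.
  by rewrite -E.
have der : forall t : R, derivable psi t 1 by move=> t; exact: ex_derive.
have H := @ler0_derive1_nincr R psi 0 1 (fun t _ => der t) _ _ 0 s (lexx 0) s0 s1.
have : psi s <= psi 0.
  apply: H.
  - move=> t; rewrite in_itv /= => /andP[t0 t1].
    rewrite derive1E derive_val.
    set u := g (x + t *: d) - g x.
    have h1 := amgm u d (L * t).
    have h2 : N2 u <= L ^+ 2 * (t ^+ 2 * N2 d).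
      have := smooth_sq (ltW L0) Hs (x + t *: d) x.
      by rewrite addrAC subrr add0r N2Z.
    have h3 : dotp u d = dotp (g (x + t *: d)) d - K by rewrite /u dotpBl.
    have Lt : 0 < L * t by rewrite mulr_gt0.
    have h4 : dotp u d * (2 * (L * t)) <= (L * t * N2 d) * (2 * (L * t)).
      apply: le_trans h1 _; rewrite exprMn; lra.
    have h5 : dotp u d <= L * t * N2 d by rewrite -(ler_pM2r (_ : 0 < 2 * (L * t))) // mulr_gt0.
    rewrite /c; lra.
  - apply: derivable_within_continuous => t _; exact: der.
rewrite /psi scale0r addr0 mulr0 expr0n /= mulr0 addr0 subr0 => Hf.
have : c * s ^+ 2 = L / 2 * s ^+ 2 * N2 d by rewrite /c; ring.
have : K * s = s * K by rewrite mulrC.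
lra.
Qed.

Local Open Scope classical_set_scope.
Lemma grad_ineq : convex_fun f -> forall x y, f x + dotp (g x) (y - x) <= f y.
Proof.
move=> Hc x y; set d := y - x.
have [df dg] := Hg x.
have Hd : derivable f x d by apply: diff_derivable.
set F := fun h : R => h^-1 *: ((f \o shift x) (h *: d) - f x).
have cF : F @ 0^' --> 'D_d f x by [].
have cR := cvg_dnbhs_at_right cF.
have E : 'D_d f x = lim (F @ 0^'+) by apply/esym/cvg_lim.
have : lim (F @ 0^'+) <= f y - f x.
  apply: limr_le; first by apply/cvg_ex; exists ('D_d f x).
  near=> h.
  have h0 : 0 < h by near: h; exact: nbhs_right_gt.
  have h1 : h < 1 by near: h; exact: nbhs_right_lt.
  rewrite /F /=.
  have Hconv := Hc y x h.
  have E2 : h *: y + (1 - h) *: x = h *: d + x.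
    by rewrite /d scalerBr scalerBl scale1r addrCA addrC.
  have : f (h *: d + x) <= h * f y + (1 - h) * f x.
    by rewrite -E2; apply: Hconv; rewrite (ltW h0) ltW.
  move=> Hh.
  have : f (h *: d + x) - f x <= h * (f y - f x) by lra.
  move=> Hh2.
  rewrite /GRing.scale /= -(ler_pM2l h0) mulrA mulfV ?gt_eqF // mul1r.
  exact: Hh2.
rewrite -E deriveE // dg; lra.
Unshelve. all: by end_near.
Qed.

Lemma dir_nonneg x d : (forall h : R, 0 < h -> h < 1 -> f x <= f (h *: d + x)) ->
  0 <= dotp (g x) d.
Proof.
move=> Hh.
have [df dg] := Hg x.
have Hd : derivable f x d by apply: diff_derivable.
set F := fun h : R => h^-1 *: ((f \o shift x) (h *: d) - f x).
have cF : F @ 0^' --> 'D_d f x by [].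
have cR := cvg_dnbhs_at_right cF.
have E : 'D_d f x = lim (F @ 0^'+) by apply/esym/cvg_lim.
have : 0 <= lim (F @ 0^'+).
  apply: limr_ge; first by apply/cvg_ex; exists ('D_d f x).
  near=> h.
  have h0 : 0 < h by near: h; exact: nbhs_right_gt.
  have h1 : h < 1 by near: h; exact: nbhs_right_lt.
  rewrite /F /= /GRing.scale /=.
  apply: mulr_ge0; first by rewrite invr_ge0 ltW.
  by rewrite subr_ge0; apply: Hh.
by rewrite -E deriveE // dg.
Unshelve. all: by end_near.
Qed.

End A.

Unset Implicit Arguments.

Theorem mainTheorem3 (R : realType) (m : nat) (p L c : R)
  (f : 'rV[R]_m -> R) (g : 'rV[R]_m -> 'rV[R]_m) (xstar : 'rV[R]_m)
  (linesearch : bool) (x v : nat -> 'rV[R]_m) (gam : nat -> R) :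
  2 < p ->
  0 < L ->
  is_gradient f g ->
  convex_fun f ->
  L_smooth L g ->
  0 < c ->
  (* inf_{x in C} ||grad f(x)|| > c *)
  (exists2 c' : R, c < c' & forall y, lpball p y -> c' <= enorm (g y)) ->
  (* xstar is the minimizer of f over C *)
  lpball p xstar ->
  (forall y, lpball p y -> f xstar <= f y) ->
  (forall i : 'I_m, xstar ord0 i != 0) ->
  (* a Frank-Wolfe run, with exact line-search or with short steps *)
  FW_iterates (lpball p) g x v gam ->
  (if linesearch then exact_ls_step f x v gam else short_step L g x v gam) ->
  exists K : R, exists2 rho : R, 0 < K /\ 0 < rho < 1 &
    forall t : nat, f (x t) - f xstar <= K * rho ^+ t.
Proof.
move=> p2 L0 Hg Hc Hs c0 [c' cc' Hc'] Hxs Hmin Hnz [Hx0 Hit] Hstep.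
have p0 : 0 < p by apply: lt_trans p2.
have p1 : 1 <= p by apply: ltW; apply: lt_trans p2; lra.
have toC : forall y : 'rV[R]_m, lpball p y <-> phi p y <= 1 := fun y => lpball_phi y p0.
set a := g xstar.
have [j aj] : exists j, a ord0 j != 0.
  case: (pickP (fun j => a ord0 j != 0)) => [j aj|H]; first by exists j.
  exfalso.
  have e0 : enorm a = 0.
    rewrite /enorm /dotp big1 ?sqrtr0 // => i _.
    by move: (H i) => /negbFE/eqP ->; rewrite mulr0.
  have := Hc' _ Hxs; rewrite -/a e0 => H'; lra.
have Hlin : forall w, phi p w <= 1 -> dotp a xstar <= dotp a w.
  move=> w Hw.
  have := @dir_nonneg R m f g Hg xstar (w - xstar).
  rewrite dotpBr subr_ge0; apply => h h0 h1.
  apply: Hmin; apply/toC.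
  rewrite addrC.
  apply: le_trans (phi_conv xstar w p1 (ltW h0) (ltW h1)) _.
  have Hx' : phi p xstar <= 1 by apply/toC.
  have e1 : h * phi p w <= h * 1 := ler_wpM2l (ltW h0) Hw.
  have e2 : (1 - h) * phi p xstar <= (1 - h) * 1 by apply: ler_wpM2l => //; lra.
  lra.
have [kap0 kap0p HQG] := QG p2 (ex_intro _ j aj) (proj1 (toC _) Hxs) Hnz Hlin.
have gambd : forall t, phi p (x t) <= 1 -> 0 <= gam t <= 1.
  move=> t Ht; have [Cv Hv Hxt] := Hit t.
  move: Hstep; case: linesearch => Hst.
    by have [H1 _] := Hst t.
  rewrite Hst; apply/andP; split; last by rewrite ge_min lexx.
  rewrite le_min ler01 /=; apply: divr_ge0; last first.
    by rewrite mulr_ge0 ?sqr_ge0 // ltW.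
  by rewrite dotpBr subr_ge0; apply: Hv; apply/toC.
have Cx : forall t, phi p (x t) <= 1.
  elim => [|t IH]; first by apply/toC.
  have [Cv Hv Hxt] := Hit t.
  have /andP[g0 g1] := gambd t IH.
  rewrite Hxt; apply: le_trans (phi_conv (x t) (v t) p1 g0 g1) _.
  have Hv' : phi p (v t) <= 1 by apply/toC.
  have e1 : gam t * phi p (v t) <= gam t * 1 := ler_wpM2l g0 Hv'.
  have e2 : (1 - gam t) * phi p (x t) <= (1 - gam t) * 1 by apply: ler_wpM2l => //; lra.
  lra.
set M := 2 * (L ^+ 2 + kap0 ^+ 2) / kap0 ^+ 3.
have M0 : 0 < M by rewrite /M !mulr_gt0 ?invr_gt0 ?exprn_gt0 // addr_gt0 // exprn_gt0.
set q := Num.min (1/2) (1 / (2 * L * M)).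
set h := fun t => f (x t) - f xstar.
have h0 : forall t, 0 <= h t.
  by move=> t; rewrite /h subr_ge0; apply: Hmin; apply/toC.
have hstep : forall t, h t.+1 <= (1 - q) * h t.
  move=> t; have [Cv Hv Hxt] := Hit t.
  set at_ := g (x t); set d := v t - x t.
  set G := dotp at_ (x t - v t).
  have EG : G = - dotp at_ d by rewrite /G /d -dotpNr opprB.
  have hG : h t <= G.
    have := grad_ineq Hg Hc (x t) xstar.
    have := Hv xstar Hxs.
    rewrite /G /h dotpBr !dotpBr -/at_; lra.
  have QGx : kap0 * N2 (x t - xstar) <= h t.
    have := HQG _ (Cx t).
    have := grad_ineq Hg Hc xstar (x t).
    rewrite /h -/a; lra.
  have Hvx : kap0 ^+ 2 * N2 (v t - xstar) <= L ^+ 2 * N2 (x t - xstar).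
    set w := v t - xstar.
    have e1 := HQG _ (proj1 (toC _) Cv); rewrite -/w in e1.
    have e2 : dotp at_ w <= 0 by rewrite /w dotpBr subr_le0; apply: Hv.
    have e3 : dotp a w = dotp (a - at_) w + dotp at_ w by rewrite dotpBl; ring.
    have e4 := amgm (a - at_) w kap0.
    have e5 : N2 (a - at_) <= L ^+ 2 * N2 (x t - xstar).
      have H := smooth_sq (ltW L0) Hs xstar (x t).
      by rewrite -(N2N (x t - xstar)) opprB.
    have e6 : kap0 * N2 w * (2 * kap0) <= dotp (a - at_) w * (2 * kap0).
      by apply: ler_wpM2r; [rewrite mulr_ge0 // ltW | lra].
    have -> : kap0 ^+ 2 * N2 w = kap0 * N2 w * (2 * kap0) - kap0 ^+ 2 * N2 w by ring.
    lra.
  have ND : N2 d <= M * h t.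
    have Hpar : N2 d <= 2 * N2 (v t - xstar) + 2 * N2 (x t - xstar).
      have := N2_par (v t - xstar) (xstar - x t).
      by rewrite /d addrA subrK -(N2N (xstar - x t)) opprB.
    have kp2 : 0 < kap0 ^+ 2 by rewrite exprn_gt0.
    have N0 := N2_ge0 (x t - xstar).
    have Nw := N2_ge0 (v t - xstar).
    rewrite /M -mulrA mulrC -mulrA ler_pdivlMl ?exprn_gt0 //.
    have f1 : kap0 ^+ 3 * N2 d <= kap0 ^+ 3 * (2 * N2 (v t - xstar) + 2 * N2 (x t - xstar)).
      by rewrite ler_wpM2l // ltW // exprn_gt0.
    have f2 : kap0 * (kap0 ^+ 2 * N2 (v t - xstar)) <= kap0 * (L ^+ 2 * N2 (x t - xstar)).
      by rewrite ler_wpM2l // ltW.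
    have f3 : L ^+ 2 * (kap0 * N2 (x t - xstar)) <= L ^+ 2 * h t.
      by rewrite ler_wpM2l // sqr_ge0.
    have f4 : kap0 ^+ 2 * (kap0 * N2 (x t - xstar)) <= kap0 ^+ 2 * h t.
      by rewrite ler_wpM2l // ltW.
    have E1 : kap0 ^+ 3 * (2 * N2 (v t - xstar) + 2 * N2 (x t - xstar)) =
      2 * (kap0 * (kap0 ^+ 2 * N2 (v t - xstar))) + 2 * (kap0 ^+ 2 * (kap0 * N2 (x t - xstar))) by ring.
    have E2 : kap0 * (L ^+ 2 * N2 (x t - xstar)) = L ^+ 2 * (kap0 * N2 (x t - xstar)) by ring.
    have E3 : h t * (2 * (L ^+ 2 + kap0 ^+ 2)) = 2 * (L ^+ 2 * h t) + 2 * (kap0 ^+ 2 * h t) by ring.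
    rewrite E3; rewrite E1 in f1; rewrite E2 in f2; lra.
  set gs := Num.min 1 (G / (L * N2 d)).
  have gs0 : 0 <= gs.
    rewrite /gs le_min ler01 /=; apply: divr_ge0; last by rewrite mulr_ge0 ?N2_ge0 // ltW.
    by apply: le_trans hG.
  have gs1 : gs <= 1 by rewrite /gs ge_min lexx.
  have Hnext : f (x t.+1) <= f (x t + gs *: d).
    move: Hstep; case: linesearch => Hst.
      have [_ H2] := Hst t.
      by rewrite Hxt; apply: H2; rewrite gs0 gs1.
    by rewrite Hxt Hst enorm_sq.
  have Hdesc := descent Hg (x t) d Hs L0 gs0 gs1.
  have NG : N2 d = 0 -> G = 0 by move=> /N2_eq0 H; rewrite EG (H at_) oppr0.
  have Har := step_arith L0 M0 (h0 t) hG (N2_ge0 d) ND NG.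
  rewrite -/gs -/q in Har.
  have E4 : gs * dotp at_ d = - gs * G by rewrite EG mulrN mulNr opprK.
  rewrite -/at_ E4 in Hdesc.
  rewrite /h.
  have : L / 2 * gs ^+ 2 * N2 d = L / 2 * gs ^+ 2 * N2 d by [].
  move: Har Hdesc Hnext; rewrite /h; lra.
have q0 : 0 < q.
  rewrite /q lt_min; apply/andP; split; first by [].
  have : 0 < 2 * L * M by apply: mulr_gt0 => //; apply: mulr_gt0 => //; lra.
  by move=> H; apply: divr_gt0 => //; lra.
have q1 : q <= 1/2 by rewrite /q ge_min lexx.
exists (h 0%N + 1); exists (1 - q).
  split; first by have := h0 0%N; lra.
  apply/andP; split; lra.
have hind : forall t, h t <= h 0%N * (1 - q) ^+ t.
  elim => [|t IH]; first by rewrite expr0 mulr1.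
  apply: le_trans (hstep t) _.
  rewrite exprS mulrCA; apply: ler_wpM2l; first lra.
  by [].
move=> t; apply: le_trans (hind t) _.
apply: ler_wpM2r; first by apply: exprn_ge0; lra.
lra.
Qed.
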